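(* Let $R$ be a $u$-ring, let $n$ be a positive integer and let $I$ be a proper ideal of $R$. Then the following conditions are equivalent: (a) $I$ is a strongly $n$-absorbing ideal of $R$; (b) $I$ is an $n$-absorbing ideal of $R$; (c) for every integer $t$ with $0\leq t\leq n$, all ideals $I_1,\dots,I_t$ of $R$ and all elements $x_1,\dots,x_{n-t}\in R$ such that $x_1\cdots x_{n-t}I_1\cdots I_t\not\subseteq I$, one has $$(I:_R x_1\cdots x_{n-t}I_1\cdots I_t)=\Big[\bigcup_{i=1}^{n-t}(I:_R x_1\cdots\widehat{x_i}\cdots x_{n-t}I_1\cdots I_t)\Big]\cup\Big[\bigcup_{j=1}^{t}(I:_R x_1\cdots x_{n-t}I_1\cdots\widehat{I_j}\cdots I_t)\Big];$$ (d) for every integer $t$ with $0\leq t\leq n$, all ideals $I_1,\dots,I_t$ of $R$ and all elements $x_1,\dots,x_{n-t}\in R$ such that $x_1\cdots x_{n-t}I_1\cdots I_t\not\subseteq I$, either $(I:_R x_1\cdots x_{n-t}I_1\cdots I_t)=(I:_R x_1\cdots\widehat{x_i}\cdots x_{n-t}I_1\cdots I_t)$ for some $1\leq i\leq n-t$, or $(I:_R x_1\cdots x_{n-t}I_1\cdots I_t)=(I:_R x_1\cdots x_{n-t}I_1\cdots\widehat{I_j}\cdots I_t)$ for some $1\leq j\leq t$.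
   Context: All rings are commutative with $1\neq 0$. A ring $R$ is a $u$-ring if whenever an ideal of $R$ is contained in a finite union of ideals of $R$, it is contained in one of those ideals. A proper ideal $I$ of $R$ is $n$-absorbing if whenever $a_1\cdots a_{n+1}\in I$ with $a_1,\dots,a_{n+1}\in R$, there are $n$ of the $a_i$'s whose product is in $I$; it is strongly $n$-absorbing if whenever $I_1\cdots I_{n+1}\subseteq I$ for ideals $I_1,\dots,I_{n+1}$ of $R$, there are $n$ of the $I_i$'s whose product is contained in $I$. For an ideal (or element) $K$, $(I:_R K)=\{r\in R: rK\subseteq I\}$; $x_1\cdots x_{n-t}I_1\cdots I_t$ denotes the ideal product (with the elements regarded as principal ideals); a hat $\widehat{\ }$ denotes omission of that factor; an empty product is $R$. *)

(* Defs.v *)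
From mathcomp Require Import all_boot all_order all_algebra.
Set Implicit Arguments. Unset Strict Implicit. Unset Printing Implicit Defensive.
Import GRing.Theory.
Local Open Scope ring_scope.

Section IdealDefs.
Variable R : comNzRingType.

Definition is_ideal (I : R -> Prop) : Prop :=
  [/\ I 0, (forall x y, I x -> I y -> I (x + y)) & (forall r x, I x -> I (r * x))].

Definition pr_ideal (I : R -> Prop) : Prop := is_ideal I /\ ~ I 1.

Definition subI (I J : R -> Prop) : Prop := forall x, I x -> J x.

Definition gen (S : R -> Prop) : R -> Prop :=
  fun x => forall J, is_ideal J -> subI S J -> J x.

Definition princ (x : R) : R -> Prop := fun y => exists r, y = r * x.

Fixpoint prodset (Is : seq (R -> Prop)) : R -> Prop :=
  match Is with
  | [::] => fun x => x = 1
  | J :: Js => fun x => exists a b, [/\ J a, prodset Js b & x = a * b]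
  end.

(* ideal product I_1 ... I_k (empty product = R) *)
Definition iprod (Is : seq (R -> Prop)) : R -> Prop := gen (prodset Is).

Definition colon (I K : R -> Prop) : R -> Prop := fun r => forall k, K k -> I (r * k).

Definition u_ring : Prop :=
  forall (I : R -> Prop) (k : nat) (Js : 'I_k -> (R -> Prop)),
    is_ideal I -> (forall j, is_ideal (Js j)) ->
    subI I (fun x => exists j, Js j x) ->
    exists j, subI I (Js j).

Definition n_absorbing (n : nat) (I : R -> Prop) : Prop :=
  pr_ideal I /\
  forall a : 'I_n.+1 -> R, I (\prod_(j < n.+1) a j) ->
    exists i : 'I_n.+1, I (\prod_(j < n.+1 | j != i) a j).

Definition strongly_n_absorbing (n : nat) (I : R -> Prop) : Prop :=
  pr_ideal I /\
  forall Js : 'I_n.+1 -> (R -> Prop), (forall j, is_ideal (Js j)) ->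
    subI (iprod [seq Js j | j <- enum 'I_n.+1]) I ->
    exists i : 'I_n.+1, subI (iprod [seq Js j | j <- enum 'I_n.+1 & j != i]) I.

(* x_1 ... x_m I_1 ... I_t  (elements regarded as principal ideals) *)
Definition mixprod (m t : nat) (x : 'I_m -> R) (Js : 'I_t -> (R -> Prop)) : R -> Prop :=
  iprod ([seq princ (x i) | i <- enum 'I_m] ++ [seq Js j | j <- enum 'I_t]).

Definition mixprod_omit_x (m t : nat) (x : 'I_m -> R) (Js : 'I_t -> (R -> Prop))
  (i0 : 'I_m) : R -> Prop :=
  iprod ([seq princ (x i) | i <- enum 'I_m & i != i0] ++ [seq Js j | j <- enum 'I_t]).

Definition mixprod_omit_I (m t : nat) (x : 'I_m -> R) (Js : 'I_t -> (R -> Prop))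
  (j0 : 'I_t) : R -> Prop :=
  iprod ([seq princ (x i) | i <- enum 'I_m] ++ [seq Js j | j <- enum 'I_t & j != j0]).

Definition cond_c (n : nat) (I : R -> Prop) : Prop :=
  forall (t : nat), (t <= n)%N ->
  forall (Js : 'I_t -> (R -> Prop)) (x : 'I_(n - t)%N -> R),
    (forall j, is_ideal (Js j)) ->
    ~ subI (mixprod x Js) I ->
    forall r, colon I (mixprod x Js) r <->
      ((exists i, colon I (mixprod_omit_x x Js i) r) \/
       (exists j, colon I (mixprod_omit_I x Js j) r)).

Definition cond_d (n : nat) (I : R -> Prop) : Prop :=
  forall (t : nat), (t <= n)%N ->
  forall (Js : 'I_t -> (R -> Prop)) (x : 'I_(n - t)%N -> R),
    (forall j, is_ideal (Js j)) ->
    ~ subI (mixprod x Js) I ->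
    (exists i, forall r, colon I (mixprod x Js) r <-> colon I (mixprod_omit_x x Js i) r) \/
    (exists j, forall r, colon I (mixprod x Js) r <-> colon I (mixprod_omit_I x Js j) r).

End IdealDefs.

(* Main.v *)
Require Import Defs.
From mathcomp Require Import all_boot all_order all_algebra.
From Stdlib Require Import Classical.
From mathcomp Require Import zify.
Set Implicit Arguments. Unset Strict Implicit. Unset Printing Implicit Defensive.
Import GRing.Theory.
Local Open Scope ring_scope.

Section Aux.
Variable R : comNzRingType.
Implicit Types (I J K : R -> Prop) (L M : seq (R -> Prop)) (x y z r : R).

Definition rmi {T : Type} (i : nat) (s : seq T) := take i s ++ drop i.+1 s.

Lemma gen_sub (S J : R -> Prop) : is_ideal J -> subI S J -> subI (gen S) J.
Proof. by move=> hJ hS x hx; apply: hx. Qed.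

Lemma gen_in (S : R -> Prop) : subI S (gen S).
Proof. by move=> x hx J _ hS; apply: hS. Qed.

Lemma iprod_sub I L : is_ideal I -> (subI (iprod L) I <-> subI (prodset L) I).
Proof.
move=> hI; split=> h x hx; first by apply: h; apply: gen_in.
exact: (gen_sub hI h).
Qed.

Lemma ideal_mulset I r : is_ideal I -> is_ideal (fun k => I (r * k)).
Proof.
case=> h0 hD hM; split; first by rewrite mulr0.
- by move=> x y hx hy; rewrite mulrDr; apply: hD.
- by move=> s x hx; rewrite mulrCA; apply: hM.
Qed.

Lemma ideal_colon I K : is_ideal I -> is_ideal (colon I K).
Proof.
case=> h0 hD hM; split.
- by move=> k _; rewrite mul0r.
- by move=> x y hx hy k hk; rewrite mulrDl; apply: hD; [apply: hx|apply: hy].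
- by move=> s x hx k hk; rewrite -mulrA; apply: hM; apply: hx.
Qed.

Lemma ideal_princ x : is_ideal (princ x).
Proof.
split; first by exists 0; rewrite mul0r.
- by move=> a b [r ->] [s ->]; exists (r + s); rewrite mulrDl.
- by move=> s a [r ->]; exists (s * r); rewrite mulrA.
Qed.

Lemma ideal_full : @is_ideal R (fun _ : R => True).
Proof. by []. Qed.

Lemma prodset_cat L M x :
  prodset (L ++ M) x <-> exists y z, [/\ prodset L y, prodset M z & x = y * z].
Proof.
elim: L x => [|K L IH] x /=.
  split; first by move=> h; exists 1, x; rewrite mul1r.
  by case=> y [z [-> hz ->]]; rewrite mul1r.
split.
  case=> a [b [ha /IH [y [z [hy hz ->]]] ->]].
  by exists (a * y), z; split => //; [exists a, y | rewrite mulrA].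
case=> y [z [[a [b [ha hb ->]]] hz ->]].
exists a, (b * z); split => //; last by rewrite mulrA.
by apply/IH; exists b, z.
Qed.

Lemma prodset_rmi M i x : (i < size M)%N -> prodset M x ->
  exists y z, prodset (rmi i M) z /\ x = y * z.
Proof.
elim: M i x => [|K M IH] [|i] x //= hi.
  case=> a [b [ha hb ->]]; exists a, b; split => //.
  by rewrite /rmi /= drop0.
case=> a [b [ha hb ->]].
have [y [z [hz ->]]] := IH i b hi hb.
exists y, (a * z); split; last by rewrite mulrCA.
by exists a, z.
Qed.

Lemma colon_iprod I M r : is_ideal I ->
  (colon I (iprod M) r <-> forall z, prodset M z -> I (r * z)).
Proof.
move=> hI; split=> h.
  by move=> z hz; apply: h; apply: gen_in.
move=> k hk; exact: (gen_sub (ideal_mulset r hI) h hk).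
Qed.

Lemma sub_cons_princ I M r : is_ideal I ->
  (subI (prodset (princ r :: M)) I <-> forall z, prodset M z -> I (r * z)).
Proof.
move=> [h0 hD hM]; split=> h.
  by move=> z hz; apply: h; exists r, z; split => //; exists 1; rewrite mul1r.
move=> x [a [b [[c ->] hb ->]]]; rewrite -mulrA; apply: hM; exact: h.
Qed.

Lemma colon_rmi I M i r : is_ideal I -> (i < size M)%N ->
  colon I (iprod (rmi i M)) r -> colon I (iprod M) r.
Proof.
move=> hI hi /(colon_iprod _ _ hI) h; apply/(colon_iprod _ _ hI) => z hz.
have [y [z' [hz' ->]]] := prodset_rmi hi hz.
rewrite mulrCA; case: hI => _ _ hM; apply: hM; exact: h.
Qed.

Lemma prodset_princ (s : seq R) x :
  prodset (map (@princ R) s) x -> exists c, x = c * \prod_(y <- s) y.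
Proof.
elim: s x => [|a s IH] x /=.
  by move=> ->; exists 1; rewrite big_nil mulr1.
case=> u [v [[c ->] /IH [d ->] ->]].
by exists (c * d); rewrite big_cons; rewrite mulrACA.
Qed.

Lemma prodset_princ_prod (s : seq R) : prodset (map (@princ R) s) (\prod_(y <- s) y).
Proof.
elim: s => [|a s IH] /=; first by rewrite big_nil.
by exists a, (\prod_(y <- s) y); split => //; [exists 1; rewrite mul1r | rewrite big_cons].
Qed.

Lemma sub_princ I (s : seq R) : is_ideal I ->
  (subI (prodset (map (@princ R) s)) I <-> I (\prod_(y <- s) y)).
Proof.
move=> hI; split=> h; first by apply: h; apply: prodset_princ_prod.
move=> x /prodset_princ [c ->]; case: hI => _ _ hM; exact: hM.
Qed.

Lemma map_rmi {T U : Type} (f : T -> U) i s : map f (rmi i s) = rmi i (map f s).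
Proof. by rewrite /rmi map_cat map_take map_drop. Qed.

Lemma rmi_catl {T : Type} i (A B : seq T) : (i < size A)%N -> rmi i (A ++ B) = rmi i A ++ B.
Proof.
move=> hi; rewrite /rmi take_cat drop_cat hi -catA; congr (_ ++ _).
case: ltnP => h //.
have e : i.+1 = size A by apply/eqP; rewrite eqn_leq h hi.
by rewrite e subnn drop0 drop_size.
Qed.
Lemma rmi_catr {T : Type} i (A B : seq T) : (size A <= i)%N ->
  rmi i (A ++ B) = A ++ rmi (i - size A) B.
Proof.
move=> hi; rewrite /rmi take_cat drop_cat ltnNge hi /= ltnNge (leqW hi) /=.
by rewrite catA subSn.
Qed.

Lemma filter_enum_rmi k (i : 'I_k) : [seq j <- enum 'I_k | j != i] = rmi i (enum 'I_k).
Proof. by rewrite -rem_filter ?enum_uniq // remE index_enum_ord. Qed.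

Lemma E2 {T : Type} k (G : 'I_k -> T) (i : 'I_k) :
  [seq G j | j <- enum 'I_k & j != i] = rmi i [seq G j | j <- enum 'I_k].
Proof. by rewrite filter_enum_rmi map_rmi. Qed.

Lemma E1 {T : Type} k (d : T) (L : seq T) : size L = k ->
  [seq nth d L j | j : 'I_k <- enum 'I_k] = L.
Proof.
move=> hs; rewrite (map_comp (nth d L) val) val_enum_ord.
by rewrite map_nth_iota0 ?hs // -hs take_size.
Qed.

Definition PS (I : R -> Prop) N (F : 'I_N -> R -> Prop) (P : pred 'I_N) :=
  forall a : 'I_N -> R, (forall j, P j -> F j (a j)) -> I (\prod_(j | P j) a j).

Lemma prodset_map N (F : 'I_N -> R -> Prop) (s : seq 'I_N) x : uniq s ->
  prodset (map F s) x <->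
  exists a : 'I_N -> R, (forall j, j \in s -> F j (a j)) /\ x = \prod_(j <- s) a j.
Proof.
elim: s x => [|j0 s IH] x /=.
  by move=> _; split; [move=> ->; exists (fun _ => 1); rewrite big_nil | case=> a [_ ->]; rewrite big_nil].
case/andP=> nj0 us; split.
  case=> u [v [hu /(IH _ us) [a [ha ->]] ->]].
  exists (fun j => if j == j0 then u else a j); split.
    move=> j; rewrite inE; case: eqP => [-> //|_] /= /ha //.
  rewrite big_cons eqxx; congr (_ * _); apply: eq_big_seq => j js.
  by case: eqP js => // ->; rewrite (negbTE nj0).
case=> a [ha ->]; exists (a j0), (\prod_(j <- s) a j); split.
- by apply: ha; rewrite inE eqxx.
- by apply/(IH _ us); exists a; split => // j js; apply: ha; rewrite inE js orbT.
- by rewrite big_cons.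
Qed.

Lemma iprod_PS I N (F : 'I_N -> R -> Prop) (P : pred 'I_N) : is_ideal I ->
  (subI (iprod [seq F j | j <- enum 'I_N & P j]) I <-> PS I F P).
Proof.
move=> hI; rewrite iprod_sub //.
have us : uniq [seq j <- enum 'I_N | P j] by rewrite filter_uniq ?enum_uniq.
split=> h.
  move=> a ha; apply: h; apply/(prodset_map _ _ us); exists a; split.
    by move=> j; rewrite mem_filter => /andP [] /ha.
  by rewrite big_filter big_enum_cond; apply: eq_bigl.
move=> x /(prodset_map _ _ us) [a [ha ->]].
rewrite big_filter big_enum_cond.
have -> : \prod_(i in 'I_N | P i) a i = \prod_(i | P i) a i by apply: eq_bigl.
apply: h => j pj; apply: ha; by rewrite mem_filter pj mem_enum.
Qed.

Lemma iprod_PS_full I N (F : 'I_N -> R -> Prop) : is_ideal I ->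
  (subI (iprod [seq F j | j <- enum 'I_N]) I <-> PS I F (fun _ => true)).
Proof.
move=> hI; rewrite -(iprod_PS _ (fun _ => true) hI).
by rewrite filter_predT.
Qed.

Lemma PS_ext I N (F G : 'I_N -> R -> Prop) (P : pred 'I_N) :
  (forall j y, P j -> F j y -> G j y) -> PS I G P -> PS I F P.
Proof. by move=> e h a ha; apply: h => j pj; apply: e => //; apply: ha. Qed.

Lemma PS_princ I N (a : 'I_N -> R) (P : pred 'I_N) : is_ideal I ->
  (PS I (fun j => princ (a j)) P <-> I (\prod_(j | P j) a j)).
Proof.
move=> [h0 hD hM]; split=> h.
  by apply: h => j _; exists 1; rewrite mul1r.
move=> c hc.
have [t ->] : exists t, \prod_(j | P j) c j = t * \prod_(j | P j) a j.
  apply: (big_ind2 (fun u v => exists t, u = t * v)).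
  - by exists 1; rewrite mul1r.
  - by move=> u1 u2 v1 v2 [t1 ->] [t2 ->]; exists (t1 * t2); rewrite mulrACA.
  - by move=> j pj; case: (hc j pj) => r ->; exists r.
exact: hM.
Qed.

Lemma ideal_gencol I (T : Type) (H : T -> Prop) (G : T -> R) : is_ideal I ->
  is_ideal (fun y => forall c, H c -> I (y * G c)).
Proof.
case=> h0 hD hM; split.
- by move=> c _; rewrite mul0r.
- by move=> x y hx hy c hc; rewrite mulrDl; apply: hD; [apply: hx|apply: hy].
- by move=> s x hx c hc; rewrite -mulrA; apply: hM; apply: hx.
Qed.

Definition Fk n (k : nat) (Js : 'I_n.+1 -> R -> Prop) (a : 'I_n.+1 -> R) (j : 'I_n.+1) :=
  if (j < k)%N then Js j else princ (a j).

Lemma absorb_core (uR : u_ring R) n I : is_ideal I ->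
  (forall a : 'I_n.+1 -> R, I (\prod_j a j) -> exists i, I (\prod_(j | j != i) a j)) ->
  forall k (Js : 'I_n.+1 -> R -> Prop) (a : 'I_n.+1 -> R), (forall j, is_ideal (Js j)) ->
  PS I (Fk k Js a) (fun _ => true) -> exists i, PS I (Fk k Js a) (fun j => j != i).
Proof.
move=> hI hn k; elim: k => [|k IH] Js a hJ hF.
  have e : forall j y, Fk 0 Js a j y <-> princ (a j) y by [].
  have /(PS_princ _ _ hI) /hn [i hi] : PS I (fun j => princ (a j)) (fun _ => true).
    by apply: (PS_ext _ hF) => j y _ /e.
  by exists i; apply: (PS_ext (G := fun j => princ (a j))) => //; apply/PS_princ.
case: (ltnP k n.+1) => hk; last first.
  have e : forall j y, Fk k.+1 Js a j y <-> Fk k Js a j y.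
    move=> j y; rewrite /Fk (leq_trans (ltn_ord j) hk) ltnS.
    by rewrite (leq_trans (ltnW (ltn_ord j)) hk).
  have [i hi] := IH Js a hJ (PS_ext (fun j y _ => proj2 (e j y)) hF).
  by exists i; apply: (PS_ext _ hi) => j y _ /e.
pose j0 : 'I_n.+1 := Ordinal hk.
have hneq : forall j : 'I_n.+1, j != j0 -> (j < k.+1)%N = (j < k)%N.
  move=> j hj; rewrite ltnS leq_eqVlt.
  have -> : (nat_of_ord j == k) = false by apply/negP => /eqP e; case/eqP: hj; apply: val_inj.
  done.
have Fj0 : Fk k.+1 Js a j0 = Js j0 by rewrite /Fk ltnSn.
pose ab (b : R) := fun j => if j == j0 then b else a j.
have A : forall b, Js j0 b -> PS I (Fk k Js (ab b)) (fun _ => true).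
  move=> b hb; apply: (PS_ext _ hF) => j y _.
  rewrite /Fk /ab; case: eqP => [->|/eqP hj].
    rewrite ltnSn /= ltnn => -[r ->]; case: (hJ j0) => _ _ hM; exact: hM.
  by rewrite -hneq.
case: (classic (exists b, Js j0 b /\ PS I (Fk k Js (ab b)) (fun j => j != j0))).
  case=> b [hb hP]; exists j0; apply: (PS_ext _ hP) => j y hj.
  by rewrite /Fk /ab (negbTE hj) -hneq.
move=> hno.
pose Q (i : 'I_n) := fun j : 'I_n.+1 => (j != lift j0 i) && (j != j0).
pose C (i : 'I_n) := fun y => forall c : 'I_n.+1 -> R,
   (forall j, Q i j -> Fk k.+1 Js a j (c j)) -> I (y * \prod_(j | Q i j) c j).
have hC : forall i, is_ideal (C i) by move=> i; apply: ideal_gencol.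
have cover : subI (Js j0) (fun x => exists i, C i x).
  move=> b hb.
  have [ib hib] := IH Js (ab b) hJ (A b hb).
  have nib : j0 != ib.
    by apply/negP => /eqP e; apply: hno; exists b; split => //; rewrite e.
  have [i' ei _] := unlift_some nib.
  exists i' => c hc.
  pose c' := fun j => if j == j0 then b else c j.
  have := hib c'.
  rewrite (bigD1 j0) //=.
  rewrite /c' eqxx.
  have -> : \prod_(i | (i != ib) && (i != j0)) (if i == j0 then b else c i) =
            \prod_(j | Q i' j) c j.
    rewrite /Q -ei; apply: eq_bigr => j /andP [_ /negbTE ->] //.
  apply => j hj; rewrite /c'; case: eqP => [->|/eqP hj0].
    by rewrite /Fk ltnn /ab eqxx; exists 1; rewrite mul1r.
  have := hc j; rewrite /Q -ei hj hj0 /= => /(_ isT).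
  by rewrite /Fk /ab (negbTE hj0) hneq.
have [i' hi'] := uR _ _ _ (hJ j0) hC cover.
exists (lift j0 i') => c hc.
rewrite (bigD1 j0) /=; last exact: neq_lift.
apply: (hi' (c j0)); first by rewrite -Fj0; apply: hc; exact: neq_lift.
by move=> j /andP [h1 h2]; apply: hc.
Qed.


Fixpoint allI (L : seq (R -> Prop)) : Prop :=
  match L with [::] => True | K :: L => is_ideal K /\ allI L end.

Lemma allI_cat L M : allI L -> allI M -> allI (L ++ M).
Proof. by elim: L => //= K L IH [? ?] ?; split => //; apply: IH. Qed.

Lemma allI_map {T : Type} (f : T -> R -> Prop) s : (forall u : T, is_ideal (f u)) -> allI (map f s).
Proof. by move=> h; elim: s => //= u s IH; split. Qed.

Lemma allI_nth L i : allI L -> is_ideal (nth (fun _ => True) L i).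
Proof.
elim: L i => [|K L IH] i /=; first by rewrite nth_nil => _; exact: ideal_full.
by case: i => [|i] [hK hL] //=; apply: IH.
Qed.

Lemma prod_as N (a : 'I_N -> R) (P : pred 'I_N) :
  \prod_(y <- [seq a j | j <- enum 'I_N & P j]) y = \prod_(j | P j) a j.
Proof. by rewrite big_map big_filter big_enum_cond; apply: eq_bigl. Qed.

Lemma prod_as_full N (a : 'I_N -> R) :
  \prod_(y <- [seq a j | j <- enum 'I_N]) y = \prod_j a j.
Proof. by rewrite -(filter_predT (enum 'I_N)) prod_as. Qed.

Lemma L_omit_x m t (x : 'I_m -> R) (Js : 'I_t -> R -> Prop) (i0 : 'I_m) :
  mixprod_omit_x x Js i0 =
  iprod (rmi i0 ([seq princ (x i) | i <- enum 'I_m] ++ [seq Js j | j <- enum 'I_t])).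
Proof. by rewrite /mixprod_omit_x E2 rmi_catl // size_map size_enum_ord. Qed.

Lemma L_omit_I m t (x : 'I_m -> R) (Js : 'I_t -> R -> Prop) (j0 : 'I_t) :
  mixprod_omit_I x Js j0 =
  iprod (rmi (m + j0) ([seq princ (x i) | i <- enum 'I_m] ++ [seq Js j | j <- enum 'I_t])).
Proof.
rewrite /mixprod_omit_I E2 rmi_catr; last by rewrite size_map size_enum_ord leq_addr.
by rewrite size_map size_enum_ord addKn.
Qed.

Lemma colon_omit_x I m t (x : 'I_m -> R) (Js : 'I_t -> R -> Prop) (i0 : 'I_m) r :
  is_ideal I -> colon I (mixprod_omit_x x Js i0) r -> colon I (mixprod x Js) r.
Proof.
move=> hI; rewrite L_omit_x => h; apply: (colon_rmi hI _ h).
by rewrite size_cat size_map size_enum_ord ltn_addr.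
Qed.

Lemma colon_omit_I I m t (x : 'I_m -> R) (Js : 'I_t -> R -> Prop) (j0 : 'I_t) r :
  is_ideal I -> colon I (mixprod_omit_I x Js j0) r -> colon I (mixprod x Js) r.
Proof.
move=> hI; rewrite L_omit_I => h; apply: (colon_rmi hI _ h).
by rewrite size_cat !size_map -!enumT !size_enum_ord ltn_add2l.
Qed.

End Aux.

Section Main.
Variable R : comNzRingType.
Variable n : nat.
Variable I : R -> Prop.
Hypothesis uR : u_ring R.
Hypothesis hpI : pr_ideal I.

Let hI : is_ideal I := proj1 hpI.

Lemma B_to_A : n_absorbing n I -> strongly_n_absorbing n I.
Proof.
case=> _ hn; split => // Js hJ /(iprod_PS_full _ hI) hP.
have hP' : PS I (Fk n.+1 Js (fun _ => 0)) (fun _ => true).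
  by apply: (PS_ext _ hP) => j y _; rewrite /Fk ltn_ord.
have [i hi] := absorb_core uR hI hn hJ hP'.
exists i; apply/(iprod_PS _ _ hI).
by apply: (PS_ext _ hi) => j y _; rewrite /Fk ltn_ord.
Qed.

Lemma A_to_B : strongly_n_absorbing n I -> n_absorbing n I.
Proof.
case=> _ hs; split => // a ha.
have [i hi] := hs (fun j => princ (a j)) (fun j => ideal_princ (a j))
  (proj2 (iprod_PS_full _ hI) (proj2 (PS_princ _ _ hI) ha)).
by exists i; apply/(PS_princ _ _ hI); apply/(iprod_PS _ _ hI).
Qed.

Lemma SAseq : strongly_n_absorbing n I ->
  forall L, allI L -> size L = n.+1 -> subI (iprod L) I ->
  exists i, (i < n.+1)%N /\ subI (iprod (rmi i L)) I.
Proof.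
case=> _ hs L hL sL hsub.
pose Js := fun j : 'I_n.+1 => nth (fun _ => True) L j.
have eL : [seq Js j | j <- enum 'I_n.+1] = L by apply: E1.
have [i hi] := hs Js (fun j => allI_nth j hL) (ltac:(by rewrite eL)).
by exists i; split => //; rewrite -eL -E2.
Qed.


Lemma rmi_consS {T : Type} i (a : T) s : rmi i.+1 (a :: s) = a :: rmi i s.
Proof. by []. Qed.

Lemma A_to_C : strongly_n_absorbing n I -> cond_c n I.
Proof.
move=> hs t ht Js x hJ hnot r.
set P := [seq princ (x i) | i <- enum 'I_(n - t)].
set Q := [seq Js j | j <- enum 'I_t].
have sP : size P = (n - t)%N by rewrite size_map size_enum_ord.
have sQ : size Q = t by rewrite size_map size_enum_ord.
split; last first.
  by case=> [[i hi]|[j hj]]; [exact: colon_omit_x hI hi | exact: colon_omit_I hI hj].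
move=> hr.
have hL : allI (princ r :: (P ++ Q)).
  split; first exact: ideal_princ.
  by apply: allI_cat; apply: allI_map => // u; apply: ideal_princ.
have sL : size (princ r :: P ++ Q) = n.+1 by rewrite /= size_cat sP sQ subnK.
have hsub : subI (iprod (princ r :: P ++ Q)) I.
  by apply/(iprod_sub _ hI)/(sub_cons_princ _ _ hI)/(colon_iprod _ _ hI).
have [[|i'] [hi hs']] := SAseq hs hL sL hsub.
  by case: hnot; move: hs'; rewrite /rmi /= drop0.
move: hs'; rewrite rmi_consS.
move/(iprod_sub _ hI)/(sub_cons_princ _ _ hI)/(colon_iprod _ _ hI) => hc.
case: (ltnP i' (n - t)) => hit.
  by left; exists (Ordinal hit); rewrite L_omit_x.
right.
have hj : (i' - (n - t) < t)%N by lia.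
by exists (Ordinal hj); rewrite L_omit_I /= subnKC.
Qed.

Lemma C_to_D : cond_c n I -> cond_d n I.
Proof.
move=> hc t ht Js x hJ hnot.
pose G := fun o : 'I_(n - t + t) => match split o with
  | inl i => colon I (mixprod_omit_x x Js i) | inr j => colon I (mixprod_omit_I x Js j) end.
have hG : forall o, is_ideal (G o).
  by move=> o; rewrite /G; case: split => ?; apply: ideal_colon.
have cov : subI (colon I (mixprod x Js)) (fun y => exists o, G o y).
  move=> y /(hc t ht Js x hJ hnot y) [[i hi]|[j hj]].
    by exists (unsplit (inl i)); rewrite /G unsplitK.
  by exists (unsplit (inr j)); rewrite /G unsplitK.
have [o ho] := uR (ideal_colon (mixprod x Js) hI) hG cov.
move: ho; rewrite /G; case: (split o) => [i|j] ho; [left; exists i | right; exists j] => r;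
  split; try exact: ho.
  exact: colon_omit_x hI.
exact: colon_omit_I hI.
Qed.

Lemma D_to_C : cond_d n I -> cond_c n I.
Proof.
move=> hd t ht Js x hJ hnot r; split; last first.
  by case=> [[i hi]|[j hj]]; [exact: colon_omit_x hI hi | exact: colon_omit_I hI hj].
move=> hr; case: (hd t ht Js x hJ hnot) => [[i hi]|[j hj]];
  [left; exists i | right; exists j]; [exact: (proj1 (hi r) hr) | exact: (proj1 (hj r) hr)].
Qed.


Lemma C_to_B : cond_c n I -> n_absorbing n I.
Proof.
move=> hc; split => // a ha.
set as_ := [seq a j | j <- enum 'I_n.+1].
have sas : size as_ = n.+1 by rewrite size_map size_enum_ord.
have ha' : I (\prod_(y <- as_) y) by rewrite prod_as_full.
set xs := take n as_.
set r := nth 0 as_ n.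
have eas : as_ = xs ++ [:: r].
  by rewrite -{1}(cat_take_drop n as_) (drop_nth 0) ?sas // drop_oversize ?sas.
have sxs : size xs = n by rewrite size_take sas ltnSn.
pose x := fun i : 'I_(n - 0) => nth 0 xs i.
have ex : [seq x i | i <- enum 'I_(n - 0)] = xs by apply: E1; rewrite subn0.
pose Js0 := fun _ : 'I_0 => fun _ : R => True.
have e0 : [seq Js0 j | j <- enum 'I_0] = [::].
  by apply: size0nil; rewrite size_map size_enum_ord.
have eP : [seq princ (x i) | i <- enum 'I_(n - 0)] = map (@princ R) xs.
  by rewrite -ex; elim: (enum _) => //= ? ? ->.
have goal : forall i : 'I_n.+1, I (\prod_(y <- rmi i as_) y) ->
    exists i, I (\prod_(j | j != i) a j).
  by move=> i hi; exists i; rewrite -prod_as E2.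
case: (classic (subI (mixprod x Js0) I)) => hsub.
  apply: (goal ord_max).
  have -> : rmi (@ord_max n) as_ = xs by rewrite /rmi /= drop_oversize ?sas // cats0.
  by move: hsub; rewrite /mixprod e0 cats0 eP => /(iprod_sub _ hI)/(sub_princ _ hI).
have hr : colon I (mixprod x Js0) r.
  rewrite /mixprod e0 cats0 eP; apply/(colon_iprod _ _ hI) => z /prodset_princ [c ->].
  rewrite mulrCA; case: hI => _ _ hM; apply: hM.
  by move: ha'; rewrite eas big_cat big_seq1 mulrC.
have := proj1 (hc 0 (leq0n n) Js0 x (fun _ => @ideal_full R) hsub r) hr.
case=> [[i hi]|[[j hj]]] //.
have hi' : (i < n)%N by move: (ltn_ord i); rewrite [X in (_ < X)%N]subn0.
have hin : (i < n.+1)%N by apply: ltnW.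
apply: (goal (Ordinal hin)) => /=.
rewrite eas rmi_catl ?sxs //.
rewrite big_cat /= big_seq1 mulrC.
move: hi; rewrite L_omit_x e0 cats0 eP -map_rmi => /(colon_iprod _ _ hI); apply.
exact: prodset_princ_prod.
Qed.

End Main.

Theorem mainTheorem1 (R : comNzRingType) (n : nat) (I : R -> Prop) :
  @u_ring R -> (0 < n)%N -> pr_ideal I ->
  (strongly_n_absorbing n I <-> n_absorbing n I) /\
  (n_absorbing n I <-> cond_c n I) /\
  (cond_c n I <-> cond_d n I).
Proof.
move=> uR _ hpI; split; [|split]; split.
- exact: A_to_B.
- exact: B_to_A.
- by move=> h; apply: A_to_C => //; apply: B_to_A.
- exact: C_to_B.
- exact: C_to_D.
- exact: D_to_C.
Qed.
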